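(* Let $H\in\mathbb{R}^{n\times d}$, $\Sigma\in\mathbb{R}^{n\times n}$ symmetric positive definite, $y\in\mathbb{R}^n$, $J\ge2$, and let $v_i^{(j)}$ be generated by deterministic EKI $$v_{i+1}^{(j)}=v_i^{(j)}+\Gamma_iH^\top(H\Gamma_iH^\top+\Sigma)^{-1}(y-Hv_i^{(j)}),$$ with $\Gamma_i$ the empirical covariance of $v_i^{(1)},\dots,v_i^{(J)}$. If $w\in\mathbb{R}^n\setminus\{0\}$ and $\delta_i\in\mathbb{R}$ satisfy $H\Gamma_iH^\top w=\delta_i\Sigma w$, then $H\Gamma_{i+1}H^\top w=\delta_{i+1}\Sigma w$ with $\delta_{i+1}=\delta_i/(1+\delta_i)^2$. In particular the generalized eigenvectors of the pencil $(H\Gamma_iH^\top,\Sigma)$ are constant in $i$.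
   Context: Empirical covariance: $\Gamma_i=\frac1{J-1}\sum_{j=1}^J(v_i^{(j)}-\bar v_i)(v_i^{(j)}-\bar v_i)^\top$, $\bar v_i=\frac1J\sum_jv_i^{(j)}$. *)

(* Defs.v *)
From HB Require Import structures.
From mathcomp Require Import all_boot all_order all_algebra.
Set Implicit Arguments. Unset Strict Implicit. Unset Printing Implicit Defensive.
Import Order.TTheory GRing.Theory Num.Theory.
Local Open Scope ring_scope.

Definition ens_mean (R : realFieldType) (d J : nat) (v : 'I_J -> 'cV[R]_d)
  : 'cV[R]_d := (J%:R)^-1 *: \sum_(j < J) v j.

Definition emp_cov (R : realFieldType) (d J : nat) (v : 'I_J -> 'cV[R]_d)
  : 'M[R]_d :=
  ((J - 1)%:R)^-1 *:
    \sum_(j < J) ((v j - ens_mean v) *m (v j - ens_mean v)^T).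

Definition eki_step (R : realFieldType) (n d J : nat) (H : 'M[R]_(n, d))
  (Sigma : 'M[R]_n) (y : 'cV[R]_n) (v : 'I_J -> 'cV[R]_d) : 'I_J -> 'cV[R]_d :=
  fun j => v j + emp_cov v *m H^T *m invmx (H *m emp_cov v *m H^T + Sigma)
                   *m (y - H *m v j).

Definition sym_posdef (R : realFieldType) (n : nat) (S : 'M[R]_n) : Prop :=
  S^T = S /\ forall x : 'cV[R]_n, x != 0 -> 0 < (x^T *m S *m x) 0 0.

(* Main.v *)
Require Import Defs.
From HB Require Import structures.
From mathcomp Require Import all_boot all_order all_algebra ring lra.
Import Order.TTheory GRing.Theory Num.Theory.
Local Open Scope ring_scope.

Section Helpers.
Variables (R : realFieldType) (d J : nat).
Implicit Types (v u : 'I_J -> 'cV[R]_d).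

Lemma ens_mean_affine v u (A : 'M[R]_d) (b : 'cV[R]_d) :
  (0 < J)%N -> (forall j, u j = A *m v j + b) ->
  ens_mean u = A *m ens_mean v + b.
Proof.
move=> J0 hu; rewrite /ens_mean.
under eq_bigr => j _ do rewrite hu.
rewrite big_split /= -mulmx_sumr sumr_const card_ord scalerDr scalemxAr.
by rewrite -scaler_nat scalerA mulVf ?scale1r // pnatr_eq0 -lt0n.
Qed.

Lemma emp_cov_affine v u (A : 'M[R]_d) (b : 'cV[R]_d) :
  (0 < J)%N -> (forall j, u j = A *m v j + b) ->
  emp_cov u = A *m emp_cov v *m A^T.
Proof.
move=> J0 hu; rewrite /emp_cov (ens_mean_affine _ _ _ _ J0 hu).
rewrite -[in RHS]scalemxAr -[in RHS]scalemxAl; congr (_ *: _).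
rewrite mulmx_sumr mulmx_suml; apply: eq_bigr => j _.
rewrite hu (_ : A *m v j + b - (A *m ens_mean v + b) = A *m (v j - ens_mean v)).
  by rewrite trmx_mul !mulmxA.
by rewrite mulmxBr opprD addrACA subrr addr0.
Qed.

Lemma emp_cov_sym v : (emp_cov v)^T = emp_cov v.
Proof.
rewrite /emp_cov linearZ /= linear_sum /=; congr (_ *: _).
by apply: eq_bigr => j _; rewrite trmx_mul trmxK.
Qed.

Lemma emp_cov_psd v (x : 'cV[R]_d) : 0 <= (x^T *m emp_cov v *m x) 0 0.
Proof.
rewrite /emp_cov -scalemxAr -scalemxAl mxE; apply: mulr_ge0.
  by rewrite invr_ge0 ler0n.
rewrite mulmx_sumr mulmx_suml summxE; apply: sumr_ge0 => j _.
set e := v j - ens_mean v.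
have -> : x^T *m (e *m e^T) *m x = (x^T *m e) *m (x^T *m e)^T.
  by rewrite trmx_mul trmxK !mulmxA.
rewrite mxE big_ord1 [X in _ * X]mxE.
by rewrite -expr2 sqr_ge0.
Qed.
End Helpers.

Lemma core (R : realFieldType) (n d : nat) (H : 'M[R]_(n, d)) (S : 'M[R]_n)
  (G : 'M[R]_d) (w : 'cV[R]_n) (delta : R) :
  sym_posdef S -> G^T = G -> (forall x : 'cV[R]_d, 0 <= (x^T *m G *m x) 0 0) ->
  w != 0 ->
  H *m G *m H^T *m w = delta *: (S *m w) ->
  let K := G *m H^T *m invmx (H *m G *m H^T + S) in
  let A := (1%:M : 'M[R]_d) - K *m H in
  H *m (A *m G *m A^T) *m H^T *m w = (delta / (1 + delta) ^+ 2) *: (S *m w).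
Proof.
move=> [Ssym Spd] Gsym Gpsd w0 heig K A.
rewrite {}/A {}/K.
set C := H *m G *m H^T in heig *.
set M := invmx (C + S).
set K := G *m H^T *m M.
set A := (1%:M : 'M[R]_d) - K *m H.
have Cpsd (x : 'cV[R]_n) : 0 <= (x^T *m C *m x) 0 0.
  have := Gpsd (H^T *m x); by rewrite trmx_mul trmxK /C !mulmxA.
have Csym : C^T = C by rewrite /C !trmx_mul trmxK Gsym mulmxA.
have CSsym : (C + S)^T = C + S by rewrite linearD /= Csym Ssym.
have Msym : M^T = M by rewrite /M trmx_inv CSsym.
have unitCS : C + S \in unitmx.
  rewrite -row_free_unit -kermx_eq0; apply/negP => /negP hk.
  case: (pickP (fun k => row k (kermx (C + S)) != 0)) => [k hk0 | h0]; last first.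
    move/eqP: hk; apply; apply/row_matrixP => k; rewrite row0; apply/eqP.
    by apply/negbFE/h0.
  set r := row k (kermx (C + S)) in hk0.
  have hr : r *m (C + S) = 0 by rewrite /r -row_mul mulmx_ker row0.
  have x0 : r^T != 0 by apply: contra hk0 => /eqP h; rewrite -[r]trmxK h trmx0.
  have := Spd _ x0; have := Cpsd r^T.
  have e : r^T^T *m C *m r^T + r^T^T *m S *m r^T = 0.
    by rewrite -mulmxDl -mulmxDr trmxK hr mul0mx.
  have := congr1 (fun N : 'M[R]_1 => N 0 0) e; rewrite /= mxE [RHS]mxE.
  lra.
have hq : 0 < (w^T *m S *m w) 0 0 := Spd _ w0.
have hd : (w^T *m C *m w) 0 0 = delta * (w^T *m S *m w) 0 0.
  by rewrite -mulmxA heig -scalemxAr mxE mulmxA.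
have d0 : 0 <= delta by rewrite -(pmulr_lge0 _ hq) -hd.
have d1 : 1 + delta != 0 by apply/negP => /eqP; lra.
have MS : M *m (S *m w) = (1 + delta)^-1 *: w.
  have -> : S *m w = (1 + delta)^-1 *: ((C + S) *m w).
    by rewrite mulmxDl heig -[in RHS](scale1r (S *m w)) scalerA mulr1 -scalerDl scalerA [delta + 1]addrC mulVf // scale1r.
  by rewrite -scalemxAr mulKmx.
have MC : M *m (C *m w) = (delta / (1 + delta)) *: w.
  by rewrite heig -scalemxAr MS scalerA.
have t1 : A^T *m H^T *m w = H^T *m ((1 - delta / (1 + delta)) *: w).
  rewrite /A linearB /= trmx1 mulmxBl mul1mx mulmxBl /K !trmx_mul trmxK Msym Gsym.
  rewrite scalerBl scale1r mulmxBr -MC.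
  congr (_ - _); by rewrite /C !mulmxA.
have t2 : H *m A *m G *m H^T *m w = delta *: (S *m w) - (delta / (1 + delta)) *: (delta *: (S *m w)).
  rewrite /A mulmxBr mulmx1 !mulmxBl -/C heig; congr (_ - _).
  by rewrite -heig scalemxAr -MC /K /C !mulmxA.
have -> : H *m (A *m G *m A^T) *m H^T *m w = H *m A *m G *m (A^T *m H^T *m w).
  by rewrite !mulmxA.
rewrite t1 -!scalemxAr mulmxA t2 scalerA -scalerBl scalerA; congr (_ *: _).
by field.
Qed.

Theorem proposition3p1 (R : realFieldType) (n d J : nat)
  (H : 'M[R]_(n, d)) (Sigma : 'M[R]_n) (y : 'cV[R]_n)
  (v : nat -> 'I_J -> 'cV[R]_d) :
  sym_posdef Sigma ->
  (2 <= J)%N ->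
  (forall i, v i.+1 = eki_step H Sigma y (v i)) ->
  forall (i : nat) (w : 'cV[R]_n) (delta : R),
    w != 0 ->
    H *m emp_cov (v i) *m H^T *m w = delta *: (Sigma *m w) ->
    H *m emp_cov (v i.+1) *m H^T *m w
      = (delta / (1 + delta) ^+ 2) *: (Sigma *m w).
Proof.
move=> HS J2 hv i w delta w0 heig.
set K := emp_cov (v i) *m H^T *m invmx (H *m emp_cov (v i) *m H^T + Sigma).
have hstep : forall j, v i.+1 j = ((1%:M : 'M[R]_d) - K *m H) *m v i j + K *m y.
  move=> j; rewrite hv /eki_step -/K mulmxBr mulmxBl mul1mx !mulmxA.
  by rewrite addrA addrAC.
have J0 : (0 < J)%N by apply: leq_trans J2.
rewrite (@emp_cov_affine _ _ _ _ _ _ _ J0 hstep).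
exact: (@core _ _ _ _ _ _ _ _ HS (@emp_cov_sym _ _ _ _) (@emp_cov_psd _ _ _ _) w0 heig).
Qed.
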